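(* Let $n,\nu\ge1$ and let the coefficients $\gamma^{(f)}_{ik,j},\gamma^{(m)}_{ik,l}$ satisfy $\gamma^{(f)}_{ik,j}\ge0$, $\gamma^{(m)}_{ik,l}\ge0$ and $\sum_{j=1}^n\gamma^{(f)}_{ik,j}+\sum_{l=1}^\nu\gamma^{(m)}_{ik,l}=1$ for all $i\in\{1,\dots,n\}$, $k\in\{1,\dots,\nu\}$. Then the normalized gonosomal operator $V$ maps $\mathcal S^{n,\nu}$ into itself if and only if, for every $i\in\{1,\dots,n\}$ and $k\in\{1,\dots,\nu\}$, the vector $(\gamma^{(f)}_{ik,1},\dots,\gamma^{(f)}_{ik,n},\gamma^{(m)}_{ik,1},\dots,\gamma^{(m)}_{ik,\nu})$ belongs to $\mathcal S^{n,\nu}$.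
   Context: $S^{n+\nu-1}=\{(x_1,\dots,x_n,y_1,\dots,y_\nu)\in\mathbb{R}^{n+\nu}: x_i\ge0,\ y_j\ge0,\ \sum_i x_i+\sum_j y_j=1\}$. $\mathcal O=\{s\in S^{n+\nu-1}: (x_1,\dots,x_n)=0 \text{ or } (y_1,\dots,y_\nu)=0\}$ and $\mathcal S^{n,\nu}=S^{n+\nu-1}\setminus\mathcal O$. The normalized gonosomal operator $V$ on $\mathcal S^{n,\nu}$ is $V(x,y)=(x',y')$ with $x'_j=\dfrac{\sum_{i=1}^n\sum_{k=1}^\nu\gamma^{(f)}_{ik,j}x_iy_k}{(\sum_{i=1}^n x_i)(\sum_{k=1}^\nu y_k)}$ ($j=1,\dots,n$), $y'_l=\dfrac{\sum_{i=1}^n\sum_{k=1}^\nu\gamma^{(m)}_{ik,l}x_iy_k}{(\sum_{i=1}^n x_i)(\sum_{k=1}^\nu y_k)}$ ($l=1,\dots,\nu$). *)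

(* Defs.v *)
(* the statement is purely algebraic (sums, products,
   quotients, order), stated over an arbitrary real field R (which
   includes the real numbers). *)
From HB Require Import structures.
From mathcomp Require Import all_boot all_order all_algebra.
Set Implicit Arguments. Unset Strict Implicit. Unset Printing Implicit Defensive.
Import Order.TTheory GRing.Theory Num.Theory.
Local Open Scope ring_scope.

(* A point of S^{n+nu-1} is a pair (x, y) with x : 'I_n -> R, y : 'I_nu -> R
   (indices 1..n shifted to 0..n-1).
   in_Snnu x y  <->  (x,y) in S^{n,nu} = S^{n+nu-1} \ O, i.e.
   nonnegative coordinates summing to 1, with x <> 0 and y <> 0. *)
Definition in_Snnu (R : realFieldType) (n nu : nat)
    (x : 'I_n -> R) (y : 'I_nu -> R) : Prop :=
  [/\ (forall i, 0 <= x i), (forall k, 0 <= y k),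
      \sum_(i < n) x i + \sum_(k < nu) y k = 1,
      ~ (forall i, x i = 0) & ~ (forall k, y k = 0)].

(* The normalized gonosomal operator V(x,y) = (x', y').
   gf i k j = gamma^(f)_{ik,j},  gm i k l = gamma^(m)_{ik,l}. *)
Definition gonoV (R : realFieldType) (n nu : nat)
    (gf : 'I_n -> 'I_nu -> 'I_n -> R) (gm : 'I_n -> 'I_nu -> 'I_nu -> R)
    (x : 'I_n -> R) (y : 'I_nu -> R) : ('I_n -> R) * ('I_nu -> R) :=
  (fun j => (\sum_(i < n) \sum_(k < nu) gf i k j * x i * y k)
              / ((\sum_(i < n) x i) * (\sum_(k < nu) y k)),
   fun l => (\sum_(i < n) \sum_(k < nu) gm i k l * x i * y k)
              / ((\sum_(i < n) x i) * (\sum_(k < nu) y k))).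

(* Main.v *)
Require Import Defs.
From HB Require Import structures.
From mathcomp Require Import all_boot all_order all_algebra.
From mathcomp Require Import lra.
Import Order.TTheory GRing.Theory Num.Theory.
Local Open Scope ring_scope.

Set Implicit Arguments.
Section H.
Variable R : realFieldType.

Lemma in_Snnu_ext (n nu : nat) (x x' : 'I_n -> R) (y y' : 'I_nu -> R) :
  x =1 x' -> y =1 y' -> in_Snnu x y -> in_Snnu x' y'.
Proof.
move=> ex ey [h1 h2 h3 h4 h5]; split.
- by move=> i; rewrite -ex.
- by move=> i; rewrite -ey.
- by rewrite -(eq_bigr _ (fun i _ => ex i)) -(eq_bigr _ (fun i _ => ey i)).
- by move=> H; apply: h4 => i; rewrite ex.
- by move=> H; apply: h5 => i; rewrite ey.
Qed.

Lemma sum_ge_term (I : finType) (F : I -> R) i0 :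
  (forall i, 0 <= F i) -> F i0 <= \sum_i F i.
Proof. by move=> H; rewrite (bigD1 i0) //= lerDl sumr_ge0. Qed.

Lemma exists_nz (I : finType) (x : I -> R) :
  ~ (forall i, x i = 0) -> exists i, x i != 0.
Proof.
move=> H; case: (boolP [exists i, x i != 0]) => [/existsP //|/existsPn H'].
by exfalso; apply: H => i; apply/eqP; move: (H' i); rewrite negbK.
Qed.

Lemma sum_delta (I : finType) (i0 : I) (a : R) :
  \sum_i (if i == i0 then a else 0) = a.
Proof. by rewrite (bigD1 i0) //= eqxx big1 ?addr0 // => i /negbTE ->. Qed.

Lemma double_delta (I J : finType) (F : I -> J -> R) i0 k0 a b :
  \sum_i \sum_k F i k * (if i == i0 then a else 0) * (if k == k0 then b else 0)
  = F i0 k0 * a * b.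
Proof.
rewrite (bigD1 i0) //= [X in _ + X]big1 ?addr0; last first.
  move=> i Hi; rewrite (negbTE Hi); apply: big1 => k _; by rewrite mulr0 mul0r.
rewrite (bigD1 k0) //= !eqxx [X in _ + X]big1 ?addr0 // => k Hk.
by rewrite (negbTE Hk) mulr0.
Qed.

Lemma ex3 (I J K : finType) (F : J -> K -> I -> R) :
  \sum_a \sum_b \sum_c F b c a = \sum_b \sum_c \sum_a F b c a.
Proof. rewrite exchange_big; apply: eq_bigr => b _; exact: exchange_big. Qed.

End H.
Arguments exists_nz {R I x}.
Arguments sum_ge_term {R I F}.
Arguments in_Snnu_ext {R n nu x x' y y'}.

Theorem proposition4p1 (R : realFieldType) (n nu : nat)
    (gf : 'I_n -> 'I_nu -> 'I_n -> R) (gm : 'I_n -> 'I_nu -> 'I_nu -> R) :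
  (0 < n)%N -> (0 < nu)%N ->
  (forall i k j, 0 <= gf i k j) ->
  (forall i k l, 0 <= gm i k l) ->
  (forall i k, \sum_(j < n) gf i k j + \sum_(l < nu) gm i k l = 1) ->
  ((forall x y, in_Snnu x y ->
      in_Snnu (gonoV gf gm x y).1 (gonoV gf gm x y).2)
   <-> (forall i k, in_Snnu (gf i k) (gm i k))).
Proof.
move=> _ _ gf0 gm0 gs; split.
- move=> HV i k.
  pose a : R := 2^-1.
  have a0 : 0 < a by rewrite /a invr_gt0 ltr0n.
  have aa : a + a = 1 by rewrite /a; lra.
  pose x := fun i' : 'I_n => if i' == i then a else 0.
  pose y := fun k' : 'I_nu => if k' == k then a else 0.
  have Sx : in_Snnu x y.
    split.
    + by move=> i'; rewrite /x; case: ifP => // _; exact: ltW.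
    + by move=> i'; rewrite /y; case: ifP => // _; exact: ltW.
    + by rewrite /x /y !sum_delta.
    + by move=> H; move: (H i); rewrite /x eqxx => /eqP; rewrite gt_eqF.
    + by move=> H; move: (H k); rewrite /y eqxx => /eqP; rewrite gt_eqF.
  have D : (\sum_(i0 < n) x i0) * (\sum_(k0 < nu) y k0) = a * a.
    by rewrite /x /y !sum_delta.
  have aa0 : a * a != 0 by rewrite mulf_neq0 // gt_eqF.
  apply: in_Snnu_ext (HV x y Sx).
  + move=> j /=; rewrite D /x /y double_delta -[_ * a * a]mulrA mulfK //.
  + move=> l /=; rewrite D /x /y double_delta -[_ * a * a]mulrA mulfK //.
- move=> Hg x y [x0 y0 xs xnz ynz].
  have [i0 Hi0] := exists_nz xnz.
  have [k0 Hk0] := exists_nz ynz.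
  have xi0 : 0 < x i0 by rewrite lt_def Hi0 x0.
  have yk0 : 0 < y k0 by rewrite lt_def Hk0 y0.
  have X0 : 0 < \sum_i x i by apply: (lt_le_trans xi0); exact: sum_ge_term.
  have Y0 : 0 < \sum_k y k by apply: (lt_le_trans yk0); exact: sum_ge_term.
  set D := (\sum_i x i) * (\sum_k y k).
  have D0 : 0 < D by rewrite mulr_gt0.
  have nn : forall (F : 'I_n -> 'I_nu -> R), (forall i k, 0 <= F i k) ->
      0 <= (\sum_i \sum_k F i k * x i * y k) / D.
    move=> F F0; rewrite divr_ge0 ?(ltW D0) //.
    apply: sumr_ge0 => i _; apply: sumr_ge0 => k _.
    by rewrite !mulr_ge0.
  have pos : forall (F : 'I_n -> 'I_nu -> R), (forall i k, 0 <= F i k) ->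
      0 < F i0 k0 -> 0 < (\sum_i \sum_k F i k * x i * y k) / D.
    move=> F F0 Fp; rewrite divr_gt0 //.
    apply: (@lt_le_trans _ _ (F i0 k0 * x i0 * y k0)); first by rewrite !mulr_gt0.
    apply: (le_trans _ (sum_ge_term i0 _)); last first.
      by move=> i; apply: sumr_ge0 => k _; rewrite !mulr_ge0.
    apply: (@sum_ge_term R _ (fun k => F i0 k * x i0 * y k) k0).
    by move=> k; rewrite !mulr_ge0.
  have [_ _ _ gnz mnz] := Hg i0 k0.
  split => /=.
  + by move=> j; apply: nn => i k.
  + by move=> l; apply: nn => i k.
  + rewrite -!mulr_suml -mulrDl.
    rewrite (@ex3 R _ _ _ (fun i k j => gf i k j * x i * y k)).
    rewrite (@ex3 R _ _ _ (fun i k l => gm i k l * x i * y k)).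
    rewrite -big_split /=.
    rewrite (eq_bigr (fun i => \sum_k x i * y k)); last first.
      move=> i _.
      rewrite -big_split /=.
      apply: eq_bigr => k _.
      by rewrite -!mulr_suml -!mulrDl gs mul1r.
    have E : \sum_i \sum_k x i * y k = (\sum_i x i) * (\sum_k y k).
      by rewrite big_distrlr.
    rewrite E divff //; exact: (lt0r_neq0 D0).
  + move=> H.
    have [j Hj] := exists_nz gnz.
    have gj : 0 < gf i0 k0 j by rewrite lt_def Hj gf0.
    move: (H j) => /eqP; rewrite gt_eqF //.
    exact: (pos (fun i k => gf i k j)).
  + move=> H.
    have [l Hl] := exists_nz mnz.
    have gl : 0 < gm i0 k0 l by rewrite lt_def Hl gm0.
    move: (H l) => /eqP; rewrite gt_eqF //.
    exact: (pos (fun i k => gm i k l)).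
Qed.
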